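(* Let $m,n_1,n_2\in\mathbb N$ and $M\in{\rm Mat}_m(\mathbb Z)$. Then $\Gamma_{M,\,n_1}$ embeds in $\Gamma_{M,\,n_1n_2}$ as an induced subgraph; that is, there is an injective map $f:V(\Gamma_{M,\,n_1})\to V(\Gamma_{M,\,n_1n_2})$ such that for all ${\bf x},{\bf y}$, $({\bf x},{\bf y})$ is an arc of $\Gamma_{M,\,n_1}$ if and only if $(f({\bf x}),f({\bf y}))$ is an arc of $\Gamma_{M,\,n_1n_2}$.
   Context: $\mathbb N$ is the set of positive integers and $\mathbb Z_n$ the integers modulo $n$. For $M\in{\rm Mat}_m(\mathbb Z)$, the move graph $\Gamma_{M,\,n}$ is the directed graph with vertex set $\mathbb Z_n^m$ and arc set $\{({\bf x},{\bf y}) : {\bf y}^T=M{\bf x}^T \text{ in } \mathbb Z_n^m\}$ (loops allowed). *)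

(* Defs.v *)
From HB Require Import structures.
From mathcomp Require Import all_boot all_order all_algebra.
Set Implicit Arguments. Unset Strict Implicit. Unset Printing Implicit Defensive.
Import Order.TTheory GRing.Theory Num.Theory.
Local Open Scope ring_scope.

(* Z_n^m is modelled as {ffun 'I_m -> 'I_n}: residues 0..n-1 (works for all
   n >= 1, unlike 'Z_n which is degenerate for n = 1). *)
Definition vtx (m n : nat) := {ffun 'I_m -> 'I_n}.

Definition move_arc (m n : nat) (M : 'M[int]_m) (x y : vtx m n) : Prop :=
  forall i : 'I_m,
    ((y i : nat)%:Z = (\sum_(j < m) M i j * ((x j : nat)%:Z)) %% (n%:Z))%Z.

(* Main.v *)
Require Import Defs.
From HB Require Import structures.
From mathcomp Require Import all_boot all_order all_algebra.
From mathcomp Require Import zify.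
Import GRing.Theory Num.Theory.

Lemma fbound (n1 n2 : nat) (p : (0 < n2)%N) (x : 'I_n1) : (n2 * x < n1 * n2)%N.
Proof. by rewrite mulnC ltn_pmul2r. Qed.

Theorem theorem3p3 (m n1 n2 : nat) (M : 'M[int]_m) :
  (0 < m)%N -> (0 < n1)%N -> (0 < n2)%N ->
  exists f : vtx m n1 -> vtx m (n1 * n2),
    injective f /\
    (forall x y : vtx m n1, move_arc M x y <-> move_arc M (f x) (f y)).
Proof.
move=> _ _ n2p.
exists (fun x => [ffun j => Ordinal (@fbound _ _ n2p (x j))]); split.
  move=> x y /ffunP H; apply/ffunP => j; have := H j; rewrite !ffunE.
  move/(congr1 val) => /= /eqP; rewrite eqn_pmul2l // => /eqP E.
  exact: val_inj.
move=> x y.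
have key : forall i, (\sum_(j < m) M i j * ((n2 * x j)%N%:Z) = n2%:Z * \sum_(j < m) M i j * ((x j : nat)%:Z))%R.
  move=> i; rewrite GRing.mulr_sumr; apply: eq_bigr => j _.
  by rewrite PoszM GRing.mulrCA.
have n2z : (0 < n2%:Z)%R by rewrite ltz_nat.
rewrite /move_arc; split=> H i.
  rewrite ffunE /=; under eq_bigr => j _ do rewrite ffunE /=.
  by rewrite key PoszM H (mulz_modr n2z) mulnC PoszM.
have := H i; rewrite ffunE /=.
under eq_bigr => j _ do rewrite ffunE /=.
rewrite key !PoszM [(n1%:Z * _)%R]GRing.mulrC -(mulz_modr n2z).
apply: GRing.mulfI; by rewrite lt0r_neq0.
Qed.
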